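(* In the setting of the context, let $\{\mu_k\}_{k\in\mathbb{N}}$ be a strictly decreasing sequence of positive scalars and $\{w_k\}_{k\in\mathbb{N}}$ a sequence with $\|F^{\mu_k}(w_{k+1})\|\le\epsilon(\mu_k)$ for all $k$, such that for a subsequence indexed by $\mathcal K$, $w_{k+1}\to w^*$ as $k\in\mathcal K\to\infty$. Let $p\in\{1,\dots,d-2\}$. Let $\mathcal E_A\subseteq\mathcal E$ be a set of equality-constraint indices for which there is a constant matrix $A_{\mathcal E_A}\in\mathbb{R}^{|\mathcal E_A|\times n}$ with $A_{\mathcal E_A}(x)=A_{\mathcal E_A}$ for all $x$ (i.e. these equality constraints are affine). Then for all $k\in\mathcal K$ sufficiently large, $c_{\mathcal E_A}(x^{w^*,p}_{k+1})=0$.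
   Context: Problem: minimize $f(x)$ subject to $c_{\mathcal I}(x)\ge0$, $c_{\mathcal E}(x)=0$, with $f,c_i\colon\mathbb{R}^n\to\mathbb{R}$, $c=(c_{\mathcal I}^T,c_{\mathcal E}^T)^T\in\mathbb{R}^m$, and $d\ge3$ the smallest number of times each of $f,c_1,\dots,c_m$ is continuously differentiable. Notation: $g=\nabla f$, $A$ the Jacobian of $c$ (subscripts on $A$ select rows, as for $c$), $H(x,\lambda)$ the Hessian in $x$ of $f(x)-\lambda^Tc(x)$, $[v]_S$ components of $v$ indexed by $S$, uppercase = diagonal matrix of the lowercase vector, $e$ the all-ones vector, $w=(x,\lambda)$ (so $w^{w^*,p}_{k+1}=(x^{w^*,p}_{k+1},\lambda^{w^*,p}_{k+1})$). $F^\mu(x,\lambda)=\bigl(g(x)-A(x)^T\lambda;\ C_{\mathcal I}(x)[\lambda]_{\mathcal I}-\mu e;\ c_{\mathcal E}(x)\bigr)$. Let $x^*$ be a KKT point at which LICQ, strict complementarity (multiplier $\lambda^*$ with $[\lambda^*]_i>0$ for active inequality indices) and the strong second-order sufficiency condition ($p^TH(x^*,\lambda^* )p\ge\omega\|p\|^2$, $\omega>0$, for all $p$ orthogonal to all active constraint gradients) hold; $\lambda^*$ is unique; $w^*=(x^*,\lambda^* )$. Let $w^{w^*,0}$ be the locally unique $(d-1)$ times continuously differentiable function near $0$ with $F^0(w^{w^*,0}(r))=r$, $w^{w^*,0}(0)=w^*$. With $\mathrm{nml}(r)=r/\|r\|$ for $r\ne0$, $\mathrm{nml}(0)=0$, define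 $w^{w^*,\mu,r}(\rho)=w^{w^*,0}\bigl(\rho\,\mathrm{nml}(r)+(0,\mu e^T,0)^T\bigr)$ for $\mu,r$ small. Set $r_{k+1}=F^{\mu_{k+1}}(w_{k+1})$ and let $w^{w^*,p}_{k+1}$ be the value at $\rho=0$ of the $p$th-order Taylor polynomial of $\rho\mapsto w^{w^*,\mu_{k+1},r_{k+1}}(\rho)$ about $\rho=\|r_{k+1}\|$. $\epsilon$ is a positive function with $\epsilon(\mu)=\Theta(\mu)$. *)

(* Defs.v *)
From HB Require Import structures.
From mathcomp Require Import all_boot all_order all_algebra.
From mathcomp Require Import all_classical all_reals all_analysis.
Set Implicit Arguments. Unset Strict Implicit. Unset Printing Implicit Defensive.
Import Order.TTheory GRing.Theory Num.Theory.
Import numFieldNormedType.Exports.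
Local Open Scope ring_scope.
Local Open Scope classical_set_scope.

Section Defs.
Context {R : realType}.

Definition norm2 {k : nat} (v : 'rV[R]_k) : R := Num.sqrt (\sum_(i < k) v 0 i ^+ 2).

Definition ebasis {n : nat} (i : 'I_n) : 'rV[R]_n := delta_mx 0 i.

Definition pderiv {n : nat} {V : normedModType R} (i : 'I_n) (f : 'rV[R]_n -> V)
  : 'rV[R]_n -> V := fun x => derive f x (ebasis i).

Definition ipderiv {n : nat} {V : normedModType R} (s : seq 'I_n) (f : 'rV[R]_n -> V)
  : 'rV[R]_n -> V := foldr (fun i g => pderiv i g) f s.

Definition Ck {n : nat} {V : normedModType R} (k : nat) (U : set 'rV[R]_n)
  (f : 'rV[R]_n -> V) : Prop :=
  forall s : seq 'I_n, (size s <= k)%N -> forall x, U x ->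
    {for x, continuous (ipderiv s f)} /\
    ((size s < k)%N -> forall i, derivable (ipderiv s f) x (ebasis i)).

Definition grad {n : nat} (f : 'rV[R]_n -> R) (x : 'rV[R]_n) : 'rV[R]_n :=
  \row_j pderiv j f x.
Definition jac {n m : nat} (c : 'I_m -> 'rV[R]_n -> R) (x : 'rV[R]_n) : 'M[R]_(m, n) :=
  \matrix_(i, j) pderiv j (c i) x.

Definition lagr {n m : nat} (f : 'rV[R]_n -> R) (c : 'I_m -> 'rV[R]_n -> R)
  (lam : 'rV[R]_m) : 'rV[R]_n -> R := fun x => f x - \sum_(i < m) lam 0 i * c i x.
Definition hessL {n m : nat} (f : 'rV[R]_n -> R) (c : 'I_m -> 'rV[R]_n -> R)
  (x : 'rV[R]_n) (lam : 'rV[R]_m) : 'M[R]_n :=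
  \matrix_(i, j) pderiv i (pderiv j (lagr f c lam)) x.

(* The constraints are indexed by 'I_m; the inequality indices form the set I,
   the equality indices are E := ~: I. *)
Definition active {n m : nat} (I : {set 'I_m}) (c : 'I_m -> 'rV[R]_n -> R)
  (x : 'rV[R]_n) (i : 'I_m) : Prop := i \notin I \/ c i x = 0.

Definition KKT {n m : nat} (I : {set 'I_m}) (f : 'rV[R]_n -> R)
  (c : 'I_m -> 'rV[R]_n -> R) (x : 'rV[R]_n) (lam : 'rV[R]_m) : Prop :=
  [/\ grad f x = lam *m jac c x,
      (forall i, i \in I -> 0 <= c i x /\ 0 <= lam 0 i /\ lam 0 i * c i x = 0)
    & (forall i, i \notin I -> c i x = 0)].

Definition LICQ {n m : nat} (I : {set 'I_m}) (c : 'I_m -> 'rV[R]_n -> R)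
  (x : 'rV[R]_n) : Prop :=
  forall a : 'I_m -> R, (forall i, ~ active I c x i -> a i = 0) ->
    \sum_(i < m) a i *: row i (jac c x) = 0 -> forall i, a i = 0.

Definition strict_compl {n m : nat} (I : {set 'I_m}) (c : 'I_m -> 'rV[R]_n -> R)
  (x : 'rV[R]_n) (lam : 'rV[R]_m) : Prop :=
  forall i, i \in I -> c i x = 0 -> 0 < lam 0 i.

Definition SSOSC {n m : nat} (I : {set 'I_m}) (f : 'rV[R]_n -> R)
  (c : 'I_m -> 'rV[R]_n -> R) (x : 'rV[R]_n) (lam : 'rV[R]_m) : Prop :=
  exists2 omega : R, 0 < omega &
    forall p : 'rV[R]_n,
      (forall i, active I c x i -> (p *m (row i (jac c x))^T) 0 0 = 0) ->
      omega * norm2 p ^+ 2 <= (p *m hessL f c x lam *m p^T) 0 0.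

Definition wx {n m : nat} (w : 'rV[R]_(n + m)) : 'rV[R]_n := lsubmx w.
Definition wl {n m : nat} (w : 'rV[R]_(n + m)) : 'rV[R]_m := rsubmx w.

(* F^mu(x,lambda) = (g - A^T lambda ; C_I lambda_I - mu e ; c_E).
   The last m components are indexed by the constraint index i : 'I_m
   (component c_i lambda_i - mu for i in I, c_i for i in E). *)
Definition Fmu {n m : nat} (I : {set 'I_m}) (f : 'rV[R]_n -> R)
  (c : 'I_m -> 'rV[R]_n -> R) (mu : R) (w : 'rV[R]_(n + m)) : 'rV[R]_(n + m) :=
  row_mx (grad f (wx w) - wl w *m jac c (wx w))
         (\row_i (if i \in I then c i (wx w) * wl w 0 i - mu else c i (wx w))).

Definition eI {n m : nat} (I : {set 'I_m}) : 'rV[R]_(n + m) :=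
  row_mx 0 (\row_i (if i \in I then 1 else 0)).

Definition nml {k : nat} (r : 'rV[R]_k) : 'rV[R]_k :=
  if r == 0 then 0 else (norm2 r)^-1 *: r.

Definition wpath {n m : nat} (I : {set 'I_m}) (W : 'rV[R]_(n + m) -> 'rV[R]_(n + m))
  (mu : R) (r : 'rV[R]_(n + m)) : R -> 'rV[R]_(n + m) :=
  fun rho => W (rho *: nml r + mu *: eI I).

Definition taylor {V : normedModType R} (p : nat) (g : R -> V) (a t : R) : V :=
  \sum_(j < p.+1) (((t - a) ^+ j) / (j`!)%:R) *: derive1n j g a.

Definition wstar_p {n m : nat} (I : {set 'I_m}) (f : 'rV[R]_n -> R)
  (c : 'I_m -> 'rV[R]_n -> R) (W : 'rV[R]_(n + m) -> 'rV[R]_(n + m))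
  (p : nat) (mu : R) (w : 'rV[R]_(n + m)) : 'rV[R]_(n + m) :=
  let r := Fmu I f c mu w in taylor p (wpath I W mu r) (norm2 r) 0.

End Defs.

(* Main.v *)
Require Import Defs.
From HB Require Import structures.
From mathcomp Require Import all_boot all_order all_algebra.
From mathcomp Require Import all_classical all_reals all_analysis.
From mathcomp Require Import ring lra.
Import Order.TTheory GRing.Theory Num.Theory.
Import numFieldNormedType.Exports.
Local Open Scope ring_scope.
Local Open Scope classical_set_scope.
Section A.
Context {R : realType}.

Lemma entry_le_norm2 k (r : 'rV[R]_k) i : `|r 0 i| <= norm2 r.
Proof.
rewrite /norm2 -sqrtr_sqr; apply: ler_wsqrtr.
rewrite (bigD1 i) //= lerDl; apply: sumr_ge0 => j _; exact: sqr_ge0.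
Qed.

Lemma mxnorm_le_norm2 k (r : 'rV[R]_k) : `|r| <= norm2 r.
Proof.
rewrite [leLHS]/Num.Def.normr/= mx_normrE.
apply: bigmax_le => [|[i j] _]; first by rewrite sqrtr_ge0.
by rewrite /= (ord1 i); apply: entry_le_norm2.
Qed.

Lemma norm2_eq0 k (r : 'rV[R]_k) : norm2 r = 0 -> r = 0.
Proof.
move=> h; apply/rowP => i; rewrite mxE; apply/normr0_eq0/eqP.
by rewrite eq_le normr_ge0 andbT -h entry_le_norm2.
Qed.

Lemma norm2_nml k (r : 'rV[R]_k) : norm2 r *: nml r = r.
Proof.
rewrite /nml; case: eqP => [->|rn0]; first by rewrite scaler0.
rewrite scalerA mulfV ?scale1r //; apply/eqP => /norm2_eq0; exact: rn0.
Qed.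

Lemma continuous_sumr {T : topologicalType} (I : Type) (r : seq I) (F : I -> T -> R) :
  (forall i, continuous (F i)) -> continuous (fun x => \sum_(i <- r) F i x).
Proof.
move=> cF; elim: r => [|a r IH].
  have -> : (fun x : T => \sum_(i <- [::]) F i x) = cst 0.
    by apply/funext => x; rewrite big_nil.
  exact: cst_continuous.
have -> : (fun x : T => \sum_(i <- a :: r) F i x) = (fun x => F a x + \sum_(i <- r) F i x).
  by apply/funext => x; rewrite big_cons.
by move=> x; apply: continuousD; [exact: cF|exact: IH].
Qed.

Lemma norm2_continuous k : continuous (@norm2 R k).
Proof.
move=> r; apply: continuous_comp; last exact: sqrt_continuous.
have := @continuous_sumr _ _ (index_enum 'I_k) (fun i (x : 'rV[R]_k) => x 0 i ^+ 2); apply.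
move=> i y; apply: continuousM; exact: coord_continuous.
Qed.

End A.
Section B.
Context {R : realType}.

Lemma incr (phi D : R -> R) b :
  (forall t : R, `|t| <= `|b| -> is_derive t (1:R) phi (D t)) ->
  exists2 th, `|th| <= `|b| & phi b - phi 0 = D th * b.
Proof.
move=> hd.
have key a c : a <= c -> (forall t, a <= t <= c -> `|t| <= `|b|) ->
  exists2 th, `|th| <= `|b| & phi c - phi a = D th * (c - a).
  move=> ac hac.
  have h1 : forall x, x \in `]a, c[%R -> is_derive x (1:R) phi (D x).
    move=> x; rewrite in_itv /= => /andP[ax xc]; apply: hd; apply: hac.
    by rewrite !ltW.
  have h2 : {in `[a, c]%R, forall x, derivable phi x 1}.
    move=> x xin; have /hac/hd[] // : a <= x <= c by move: xin; rewrite in_itv.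
  have [th thin eq] := @MVT_segment R phi D a c ac h1 (derivable_within_continuous h2).
  by exists th => //; apply: hac; move: thin; rewrite in_itv.
case: (leP 0 b) => b0.
  have hac t : 0 <= t <= b -> `|t| <= `|b|.
    by case/andP => t0 tb; rewrite !ger0_norm // (le_trans t0 tb).
  have [th th1 eq] := key 0 b b0 hac.
  by exists th => //; rewrite eq subr0.
have hac t : b <= t <= 0 -> `|t| <= `|b|.
  case/andP => bt t0; rewrite !ler0_norm ?lerN2 // ?ltW //.
have [th th1 eq] := key b 0 (ltW b0) hac.
by exists th => //; rewrite -opprB eq sub0r mulrN opprK.
Qed.

Lemma derive_line {V W : normedModType R} (F : V -> W) (e y : V) (t : R) :
  derive (fun s : R => F (s *: e + y)) t 1 = derive F (t *: e + y) e.
Proof.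
rewrite /derive; set g1 := fun h => h^-1 *: _; set g2 := fun h => h^-1 *: _.
suff -> : g1 = g2 by [].
by apply/funext => h; rewrite /g1 /g2 /= [_%:A]mulr1 scalerDl addrA.
Qed.

Lemma derivable_line {V W : normedModType R} (F : V -> W) (e y : V) (t : R) :
  derivable (fun s : R => F (s *: e + y)) t 1 = derivable F (t *: e + y) e.
Proof.
rewrite /derivable; set g1 := fun h => h^-1 *: _; set g2 := fun h => h^-1 *: _.
suff -> : g1 = g2 by [].
by apply/funext => h; rewrite /g1 /g2 /= [_%:A]mulr1 scalerDl addrA.
Qed.

End B.
Section C.
Context {R : realType} {N : nat}.
Implicit Types (x v y : 'rV[R]_N).

Definition zpart x v (h : R) (k : nat) : 'rV[R]_N :=
  x + h *: \row_j (if (j < k)%N then v 0 j else 0).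

Lemma zpart0 x v h : zpart x v h 0 = x.
Proof.
rewrite /zpart; have -> : \row_j (if (j < 0)%N then v 0 j else 0) = 0 :> 'rV[R]_N.
  by apply/rowP => j; rewrite !mxE.
by rewrite scaler0 addr0.
Qed.

Lemma zpartN x v h : zpart x v h N = h *: v + x.
Proof.
rewrite /zpart addrC; congr (_ *: _ + _); apply/rowP => j; rewrite !mxE.
by rewrite ltn_ord.
Qed.

Lemma zpartS x v h (k : 'I_N) :
  zpart x v h k.+1 = (h * v 0 k) *: ebasis k + zpart x v h k.
Proof.
rewrite /zpart addrCA; congr (_ + _); apply/rowP => j; rewrite !mxE /=.
rewrite ltnS leq_eqVlt; case: (eqVneq j k) => [->|jk] /=.
  by rewrite ltnn eqxx /= mulr1 mulr0 addr0.
rewrite mulr0 add0r; have -> // : ((j:nat) == k) = false.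
by apply/negbTE.
Qed.

Lemma entry_le_mxnorm (m : nat) (r : 'rV[R]_m) i : `|r 0 i| <= `|r|.
Proof.
rewrite [leRHS]/Num.Def.normr/= mx_normrE.
by apply: le_trans (le_bigmax _ _ (0, i)); rewrite /=.
Qed.

Lemma mxnorm_lt (m : nat) (r : 'rV[R]_m) e : 0 < e -> (forall i, `|r 0 i| < e) -> `|r| < e.
Proof.
move=> e0 h; rewrite [ltLHS]/Num.Def.normr/= mx_normrE.
by apply: bigmax_lt => // -[i j] _ /=; rewrite (ord1 i).
Qed.

Lemma zpart_near x v h (k : 'I_N) t : `|t| <= `|h * v 0 k| ->
  `|t *: ebasis k + zpart x v h k - x| <= `|h| * `|v|.
Proof.
move=> ht; rewrite /zpart (addrC x) addrA addrK.
rewrite [leLHS]/Num.Def.normr/= mx_normrE.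
apply: bigmax_le => [|[i j] _]; first by rewrite mulr_ge0.
rewrite (ord1 i) /= !mxE /=.
case: (eqVneq j k) => [->|jk] /=.
  rewrite ltnn mulr0 addr0 mulr1 (le_trans ht) // normrM.
  by rewrite ler_wpM2l // entry_le_mxnorm.
rewrite mulr0 add0r; case: ifP => _; last by rewrite mulr0 normr0 mulr_ge0.
by rewrite normrM ler_wpM2l // entry_le_mxnorm.
Qed.


Lemma C1 (H : 'rV[R]_N -> R) (D : 'I_N -> 'rV[R]_N -> R) (U : set 'rV[R]_N) x v :
  nbhs x U ->
  (forall j y, U y -> is_derive y (ebasis j) H (D j y)) ->
  (forall j, {for x, continuous (D j)}) ->
  is_derive x v H (\sum_j v 0 j * D j x).
Proof.
move=> nU hd hc.
set L := \sum_j v 0 j * D j x.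
have key : forall e : R, 0 < e -> exists2 eta : R, 0 < eta & forall h : R, `|h| < eta ->
    `|H (h *: v + x) - H x - h * L| <= e * `|h|.
  move=> e e0.
  set e' := e / (N%:R * `|v| + 1).
  have den0 : 0 < N%:R * `|v| + 1 by rewrite ltr_wpDl // mulr_ge0.
  have e'0 : 0 < e' by rewrite divr_gt0.
  have Hn : \forall y \near x, U y /\ forall j, `|D j x - D j y| <= e'.
    near=> y; split; first by near: y; exact: nU.
    near: y; apply: filter_forall => j.
    exact: ((cvgrPdist_le _ _).1 (hc j)) e' e'0.
  have [rho rho0 hrho] := (nbhs_ballP _ _).1 Hn.
  have v1 : 0 < `|v| + 1 by rewrite ltr_wpDl.
  exists (rho / (`|v| + 1)); first by rewrite divr_gt0.
  move=> h hh.
  have hv : `|h| * `|v| < rho.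
    apply: (le_lt_trans _ (_ : `|h| * (`|v| + 1) < rho)).
      by rewrite ler_wpM2l // lerDl.
    by rewrite -ltr_pdivlMr.
  have step : forall k : 'I_N, `|H (zpart x v h k.+1) - H (zpart x v h k) - h * (v 0 k * D k x)|
       <= e' * (`|h| * `|v 0 k|).
    move=> k.
    pose phi t := H (t *: ebasis k + zpart x v h k).
    pose D' t := D k (t *: ebasis k + zpart x v h k).
    have near_ok : forall t, `|t| <= `|h * v 0 k| ->
        U (t *: ebasis k + zpart x v h k) /\
        forall j, `|D j x - D j (t *: ebasis k + zpart x v h k)| <= e'.
      move=> t ht; apply: hrho; rewrite -ball_normE /ball_ /= distrC.
      by apply: le_lt_trans hv; exact: zpart_near.
    have hyp : forall t, `|t| <= `|h * v 0 k| -> is_derive t (1:R) phi (D' t).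
      move=> t ht; have [Uy _] := near_ok t ht.
      have [dv dval] := hd k _ Uy.
      apply: DeriveDef; first by rewrite /phi derivable_line.
      by rewrite /phi derive_line dval.
    have [th th1 eq] := @incr R phi D' (h * v 0 k) hyp.
    have -> : H (zpart x v h k.+1) - H (zpart x v h k) = D' th * (h * v 0 k).
      by rewrite -eq /phi zpartS scale0r add0r.
    have [_ /(_ k)] := near_ok th th1; rewrite -/(D' th) => hb.
    have -> : D' th * (h * v 0 k) - h * (v 0 k * D k x) = (D' th - D k x) * (h * v 0 k) by ring.
    rewrite normrM [`|h * _|]normrM; apply: ler_pM => //; by rewrite distrC.
  have tel : H (h *: v + x) - H x = \sum_(k < N) (H (zpart x v h k.+1) - H (zpart x v h k)).
    have := telescope_sumr (fun k => H (zpart x v h k)) (leq0n N).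
    by rewrite zpartN zpart0 big_mkord => <-.
  have hL : h * L = \sum_k h * (v 0 k * D k x) by rewrite mulr_sumr.
  rewrite tel hL -sumrB.
  apply: le_trans (ler_norm_sum _ _ _) _.
  apply: le_trans (ler_sum _ (fun k _ => step k)) _.
  rewrite -mulr_sumr.
  have A : \sum_(k < N) `|h| * `|v 0 k| <= N%:R * `|v| * `|h|.
    apply: (@le_trans _ _ (\sum_(k < N) `|h| * `|v|)).
      by apply: ler_sum => k _; apply: ler_wpM2l => //; exact: entry_le_mxnorm.
    rewrite sumr_const card_ord -[X in X <= _]mulr_natl le_eqVlt; apply/orP; left; apply/eqP; ring.
  apply: le_trans (ler_wpM2l (ltW e'0) A) _.
  rewrite mulrA; apply: ler_wpM2r => //.
  rewrite /e' mulrAC ler_pdivrMr //; apply: ler_wpM2l; [exact: ltW|by rewrite lerDl].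
have cv : (fun h : R => h^-1 *: ((H \o shift x) (h *: v) - H x)) @ 0^' --> L.
  apply/cvgrPdist_le => e e0.
  have [eta eta0 heta] := key e e0.
  near=> h.
  have hn0 : h != 0 by near: h; exact: nbhs_dnbhs_neq.
  have hlt : `|h| < eta by near: h; exact: dnbhs0_lt.
  have hb := heta h hlt.
  have -> : L - h^-1 *: ((H \o shift x) (h *: v) - H x) = h^-1 * (h * L - (H (h *: v + x) - H x)).
    by rewrite mulrBr mulKf.
  by rewrite normrM normfV ler_pdivrMl ?normr_gt0 // distrC [_ * e]mulrC.
apply: DeriveDef; first by apply/cvg_ex; exists L.
exact: cvg_lim.
Unshelve. all: by end_near.
Qed.


Lemma C1v {M : nat} (G : 'rV[R]_N -> 'rV[R]_M) (U : set 'rV[R]_N) x v :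
  nbhs x U ->
  (forall j y, U y -> derivable G y (ebasis j)) ->
  (forall j, {for x, continuous (fun y => derive G y (ebasis j))}) ->
  is_derive x v G (\sum_j v 0 j *: derive G x (ebasis j)).
Proof.
move=> nU hd hc.
have comp : forall i k, is_derive x v (fun y => G y i k)
    (\sum_j v 0 j * (derive G x (ebasis j)) i k).
  move=> i k; apply: (@C1 _ (fun j y => derive G y (ebasis j) i k) U x v nU).
  - move=> j y Uy; apply: DeriveDef.
      exact: (derivable_mxP _ _ _).1 (hd j y Uy) i k.
    by rewrite (derive_mx (hd j y Uy)) mxE.
  - move=> j.
    exact: (@continuous_comp _ _ _ (fun y => derive G y (ebasis j)) (fun A : 'rV[R]_M => A i k) x (hc j) (@coord_continuous _ _ _ i k _)).
have dv : derivable G x v by apply/derivable_mxP => i k; case: (comp i k).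
apply: DeriveDef => //; rewrite derive_mx //; apply/matrixP => i k; rewrite !mxE.
have [_ ->] := comp i k.
by rewrite summxE; apply: eq_bigr => j _; rewrite mxE.
Qed.

End C.

Section E.
Context {R : realType} {M : nat}.

Definition lin (a w : 'rV[R]_M) : R := \sum_l a 0 l * w 0 l.

Lemma lin_lin (a : 'rV[R]_M) (K : nat) (c : 'I_K -> R) (X : 'I_K -> 'rV[R]_M) :
  lin a (\sum_j c j *: X j) = \sum_j c j * lin a (X j).
Proof.
rewrite /lin (eq_bigr (fun l => \sum_j a 0 l * (c j * X j 0 l))) => [|l _]; last first.
  by rewrite summxE mulr_sumr; apply: eq_bigr => j _; rewrite mxE.
rewrite exchange_big; apply: eq_bigr => j _; rewrite mulr_sumr; apply: eq_bigr => l _.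
by rewrite mulrCA.
Qed.

Lemma is_derive_comp_coord (f : R -> 'rV[R]_M) r l : derivable f r 1 ->
  is_derive r (1:R) (fun t => f t 0 l) ((derive1 f r) 0 l).
Proof.
move=> df; apply: DeriveDef; first exact: (derivable_mxP _ _ _).1 df 0 l.
by rewrite derive1E (derive_mx df) mxE.
Qed.

Lemma is_derive_lin (f : R -> 'rV[R]_M) r a : derivable f r 1 ->
  is_derive r (1:R) (fun t => lin a (f t)) (lin a (derive1 f r)).
Proof.
move=> df; rewrite /lin -fct_sumE.
apply: is_derive_sum => l; apply: is_deriveZ; exact: is_derive_comp_coord.
Qed.

End E.

Section D.
Context {R : realType} {N M : nat} (W : 'rV[R]_N -> 'rV[R]_M) (U : set 'rV[R]_N) (q : nat).
Hypothesis oU : forall y, U y -> nbhs y U.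
Hypothesis CkW : Ck q U W.
Variables (v b : 'rV[R]_N).

Lemma dP s y : (size s < q)%N -> U y ->
  is_derive y v (ipderiv s W) (\sum_j v 0 j *: ipderiv (j :: s) W y).
Proof.
move=> hs Uy.
have h1 : forall j y', U y' -> derivable (ipderiv s W) y' (ebasis j).
  by move=> j y' Uy'; exact: ((CkW s (ltnW hs) y' Uy').2 hs j).
have h2 : forall j, {for y, continuous (fun y => derive (ipderiv s W) y (ebasis j))}.
  by move=> j; exact: ((CkW (j :: s) hs y Uy).1).
exact: (@C1v R N M (ipderiv s W) U y v (oU _ Uy) h1 h2).
Qed.

Fixpoint Top (k : nat) (s : seq 'I_N) : 'rV[R]_N -> 'rV[R]_M :=
  match k with
  | 0 => ipderiv s W
  | k'.+1 => fun y => \sum_j v 0 j *: Top k' (j :: s) y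
  end.

Lemma dT k : forall s y, (size s + k < q)%N -> U y -> is_derive y v (Top k s) (Top k.+1 s y).
Proof.
elim: k => [|k IH] s y hs Uy.
  by apply: dP => //; rewrite addn0 in hs.
rewrite [Top k.+1 s]/= -fct_sumE.
apply: is_derive_sum => j; apply: is_deriveZ; apply: IH => //.
by rewrite /= addSnnS.
Qed.

Definition gline (r : R) := W (r *: v + b).

Lemma near_line r : U (r *: v + b) -> \forall r' \near r, U (r' *: v + b).
Proof.
move=> Ur.
have c : continuous (fun r : R => r *: v + b).
  have -> : (fun r : R => r *: v + b) = ( *:%R^~ v) + cst b by apply/funext => r1 /=.
  move=> r0; apply: continuousD; [exact: scalel_continuous | exact: cst_continuous].
exact: (c r _ (oU _ Ur)).
Qed.

Lemma line_derive k : (k <= q)%N -> forall r, U (r *: v + b) ->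
  derive1n k gline r = Top k [::] (r *: v + b).
Proof.
elim: k => [|k IH] hk r Ur; first by rewrite derive1n0.
rewrite derive1nS derive1E.
rewrite (@near_eq_derive R R _ _ (fun r0 : R => Top k [::] (r0 *: v + b))); last first.
  by near=> r'; apply: IH; [exact: ltnW | near: r'; exact: near_line].
rewrite (derive_line (Top k [::])).
by have [_ ->] := dT k [::] _ hk Ur.
Unshelve. all: by end_near.
Qed.

Lemma line_derivable k : (k < q)%N -> forall r, U (r *: v + b) ->
  derivable (derive1n k gline) r 1.
Proof.
move=> hk r Ur.
apply: (@near_eq_derivable R R _ (fun r0 : R => Top k [::] (r0 *: v + b))).
  by near=> r'; apply/esym/line_derive; [exact: ltnW | near: r'; exact: near_line].
by rewrite derivable_line; have [] := dT k [::] _ hk Ur.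
Unshelve. all: by end_near.
Qed.


Lemma lin_line (a : 'rV[R]_M) k : (k <= q)%N -> forall r, U (r *: v + b) ->
  derive1n k (fun t => lin a (gline t)) r = lin a (derive1n k gline r).
Proof.
elim: k => [|k IH] hk r Ur; first by rewrite !derive1n0.
rewrite derive1nS derive1E.
rewrite (@near_eq_derive R R _ _ (fun r0 : R => lin a (derive1n k gline r0))); last first.
  by near=> r'; apply: IH; [exact: ltnW | near: r'; exact: near_line].
have [_ ->] := is_derive_lin _ _ a (line_derivable k hk r Ur).
by rewrite derive1nS.
Unshelve. all: by end_near.
Qed.

End D.

Section F.
Context {R : realType}.

Lemma affine_derive (phi : R -> R) (J : set R) (al be : R) :
  (forall t, J t -> \forall t' \near t, J t') ->
  (forall t, J t -> phi t = al * t + be) ->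
  forall k r, J r -> derive1n k.+1 phi r = if k == 0%N then al else 0.
Proof.
move=> oJ hphi; elim=> [|k IH] r Jr.
  rewrite derive1n1 derive1E.
  rewrite (@near_eq_derive R R _ phi (fun t : R => al * t + be)); last first.
    by near=> t; apply: hphi; near: t; exact: oJ.
  have -> : (fun t : R => al * t + be) = (al \*: id) + cst be by apply/funext => t.
  by rewrite deriveD // deriveZ // derive_id derive_cst addr0 [_%:A]mulr1.
rewrite derive1nS derive1E.
rewrite (@near_eq_derive R R _ _ (cst (if k == 0%N then al else 0))); last first.
  by near=> t; apply: IH; near: t; exact: oJ.
by rewrite derive_cst.
Unshelve. all: by end_near.
Qed.

End F.

Section G.
Context {R : realType} {N : nat}.

Lemma affine_c (h : 'rV[R]_N -> R) (a : 'rV[R]_N) :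
  (forall y j, is_derive y (ebasis j) h (a 0 j)) ->
  forall y, h y = h 0 + \sum_l a 0 l * y 0 l.
Proof.
move=> hd y.
have tel := telescope_sumr (fun k => h (zpart 0 y 1 k)) (leq0n N).
rewrite zpartN zpart0 scale1r addr0 big_mkord in tel.
apply/eqP; rewrite addrC -subr_eq; apply/eqP; rewrite -tel; apply: eq_bigr => k _.
pose phi t := h (t *: ebasis k + zpart 0 y 1 k).
have hyp : forall t, `|t| <= `|1 * y 0 k| -> is_derive t (1:R) phi ((fun _ => a 0 k) t).
  move=> t _; have [dv dval] := hd (t *: ebasis k + zpart 0 y 1 k) k.
  apply: DeriveDef; first by rewrite /phi derivable_line.
  by rewrite /phi derive_line dval.
have [th _ eq] := @incr R phi (fun _ => a 0 k) (1 * y 0 k) hyp.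
rewrite zpartS; have -> : h (zpart 0 y 1 k) = phi 0 by rewrite /phi scale0r add0r.
by rewrite eq mul1r mulrC.
Qed.

End G.
Section H.
Context {R : realType} {n m : nat} (I : {set 'I_m}) (f : 'rV[R]_n -> R)
  (c : 'I_m -> 'rV[R]_n -> R).

Lemma F_shift mu w : Fmu I f c mu w + mu *: eI I = Fmu I f c 0 w :> 'rV[R]_(n + m).
Proof.
rewrite /Fmu /eI scale_row_mx scaler0 add_row_mx addr0; congr row_mx.
apply/rowP => i; rewrite !mxE; case: ifP => _.
  by rewrite mulr1 subr0 subrK.
by rewrite mulr0 addr0.
Qed.

Lemma KKT_F0 xs lams : KKT I f c xs lams -> Fmu I f c 0 (row_mx xs lams) = 0.
Proof.
case=> hg hI hE; rewrite /Fmu /wx /wl row_mxKl row_mxKr hg subrr -row_mx0.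
congr row_mx; apply/rowP => i; rewrite !mxE; case: ifP => iI.
  by have [_ [_ h]] := hI i iI; rewrite subr0 mulrC h.
by apply: hE; rewrite iI.
Qed.

End H.
Section Cont.
Context {R : realType} {T : topologicalType}.

Lemma contB (F G : T -> R) : continuous F -> continuous G -> continuous (fun x => F x - G x).
Proof.
by move=> cF cG x; apply: continuousB; [exact: cF | exact: cG].
Qed.

Lemma contM (F G : T -> R) : continuous F -> continuous G -> continuous (fun x => F x * G x).
Proof. by move=> cF cG x; apply: continuousM; [exact: cF | exact: cG]. Qed.

Lemma contC {S : topologicalType} {Q : topologicalType} (F : T -> S) (G : S -> Q) :
  continuous F -> continuous G -> continuous (fun x => G (F x)).
Proof. by move=> cF cG x; exact: (continuous_comp (cF x) (cG (F x))). Qed.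

End Cont.

Section H2.
Context {R : realType} {n m : nat} (I : {set 'I_m}) (f : 'rV[R]_n -> R)
  (c : 'I_m -> 'rV[R]_n -> R) (d : nat).
Hypothesis hd : (1 <= d)%N.
Hypothesis CkF : Ck d setT f.
Hypothesis Ckc : forall i, Ck d setT (c i).

Lemma F0_cont i : continuous (fun w : 'rV[R]_(n + m) => Fmu I f c 0 w 0 i).
Proof.
have pf j : continuous (pderiv j f) by move=> x; exact: (CkF [:: j] hd x Logic.I).1.
have cf l : continuous (c l) by move=> x; exact: (Ckc l [::] (leq0n d) x Logic.I).1.
have pc j l : continuous (pderiv j (c l)) by move=> x; exact: (Ckc l [:: j] hd x Logic.I).1.
have cl := @continuous_lsubmx R 1 n m.
have cr := @continuous_rsubmx R 1 n m.
case: (split_ordP i) => j ->.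
  have -> : (fun w : 'rV[R]_(n + m) => Fmu I f c 0 w 0 (lshift m j)) =
     (fun w => pderiv j f (lsubmx w) - \sum_l (rsubmx w) 0 l * pderiv j (c l) (lsubmx w)).
    apply/funext => w; rewrite /Fmu row_mxEl !mxE; congr (_ - _).
    by apply: eq_bigr => l _; rewrite !mxE.
  apply: contB; first by move=> x; apply: continuous_comp; [exact: cl | exact: pf].
  have := @continuous_sumr R _ _ (index_enum 'I_m) (fun l (w : 'rV[R]_(n + m)) => (rsubmx w) 0 l * pderiv j (c l) (lsubmx w)); apply => l.
  apply: contM.
    by move=> x; exact: (continuous_comp (cr x) (@coord_continuous _ _ _ 0 l (rsubmx x))).
  by move=> x; exact: (continuous_comp (cl x) (pc j l (lsubmx x))).
have -> : (fun w : 'rV[R]_(n + m) => Fmu I f c 0 w 0 (rshift n j)) =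
   (fun w => if j \in I then c j (lsubmx w) * (rsubmx w) 0 j - 0 else c j (lsubmx w)).
  by apply/funext => w; rewrite /Fmu row_mxEr !mxE.
case: (j \in I).
  apply: contB; last exact: cst_continuous.
  apply: contM; first by move=> x; exact: (continuous_comp (cl x) (cf j (lsubmx x))).
  by move=> x; exact: (continuous_comp (cr x) (@coord_continuous _ _ _ 0 j (rsubmx x))).
by move=> x; exact: (continuous_comp (cl x) (cf j (lsubmx x))).
Qed.

End H2.

Theorem proposition2 (R : realType) (n m d : nat)
  (I : {set 'I_m}) (f : 'rV[R]_n -> R) (c : 'I_m -> 'rV[R]_n -> R)
  (xs : 'rV[R]_n) (lams : 'rV[R]_m)
  (W : 'rV[R]_(n + m) -> 'rV[R]_(n + m))
  (mu : nat -> R) (w : nat -> 'rV[R]_(n + m)) (eps : R -> R)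
  (K : set nat) (p : nat) (EA : {set 'I_m}) :
  (3 <= d)%N ->
  Ck d setT f -> (forall i, Ck d setT (c i)) ->
  KKT I f c xs lams ->
  LICQ I c xs ->
  strict_compl I c xs lams ->
  SSOSC I f c xs lams ->
  (forall lam, KKT I f c xs lam -> lam = lams) ->
  (* W = w^{w*,0}: (d-1)-times continuously differentiable near 0,
     F^0(W(r)) = r near 0, W(0) = w* *)
  (exists2 delta : R, 0 < delta &
     Ck d.-1 [set r | norm2 r < delta] W /\
     (forall r, norm2 r < delta -> Fmu I f c 0 (W r) = r)) ->
  W 0 = row_mx xs lams ->
  (* eps positive with eps(mu) = Theta(mu) as mu -> 0 *)
  (forall t, 0 < t -> 0 < eps t) ->
  (exists c1 c2 t0 : R, [/\ 0 < c1, 0 < c2, 0 < t0 &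
     forall t, 0 < t < t0 -> c1 * t <= eps t <= c2 * t]) ->
  (forall k, 0 < mu k) -> (forall k, mu k.+1 < mu k) ->
  (forall k, norm2 (Fmu I f c (mu k) (w k.+1)) <= eps (mu k)) ->
  (forall N, exists k, (N <= k)%N /\ K k) ->
  (forall e : R, 0 < e -> exists N, forall k, K k -> (N <= k)%N ->
     norm2 (w k.+1 - row_mx xs lams) < e) ->
  (1 <= p <= d - 2)%N ->
  EA \subset ~: I ->
  (exists AEA : 'M[R]_(m, n), forall i, i \in EA -> forall x, row i (jac c x) = row i AEA) ->
  exists N, forall k, K k -> (N <= k)%N ->
    forall i, i \in EA -> c i (wx (wstar_p I f c W p (mu k.+1) (w k.+1))) = 0.
Proof.
move=> d3 CkF Ckc hKKT _ _ _ _ [delta delta0 [CkW hW]] _ _ _ _ _ _ _ hconv hp hEA [AEA hA].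
set ws := row_mx xs lams.
set U := [set r : 'rV[R]_(n + m) | norm2 r < delta].
have oU : forall y, U y -> nbhs y U.
  by move=> y Uy; exact: (cvgr_lt _ (norm2_continuous _ y) _ Uy).
have d1 : (0 < d)%N by apply: leq_trans d3.
have nFc : continuous (fun w => norm2 (Fmu I f c 0 w)).
  rewrite /norm2 => w0; apply: continuous_comp; last exact: sqrt_continuous.
  have := @continuous_sumr R _ _ (index_enum 'I_(n + m)) (fun i (w : 'rV[R]_(n + m)) => Fmu I f c 0 w 0 i ^+ 2); apply => i.
  by apply: contM; exact: (F0_cont I f c d d1 CkF Ckc i).
have [eta eta0 heta] : exists2 eta : R, 0 < eta &
    forall w', `|ws - w'| < eta -> norm2 (Fmu I f c 0 w') < delta.
  have : \forall w' \near ws, norm2 (Fmu I f c 0 w') < delta.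
    apply: (cvgr_lt _ (nFc ws)).
    by rewrite /ws (KKT_F0 I f c xs lams hKKT) /norm2 big1 ?sqrtr0 // => i _; rewrite mxE expr0n.
  case/(nbhs_ballP _ _) => e e0 he; exists e => // w' hw'; apply: he.
  by rewrite -ball_normE /ball_ /=.
have [N0 hN0] := hconv eta eta0.
exists N0 => k Kk kN i iEA.
set w1 := w k.+1; set mu1 := mu k.+1.
have Uw : U (Fmu I f c 0 w1).
  apply: heta; rewrite distrC; apply: (le_lt_trans (mxnorm_le_norm2 _ _)).
  exact: hN0.
set r := Fmu I f c mu1 w1.
pose rho0 := norm2 r; pose vv := nml r; pose bb : 'rV[R]_(n + m) := mu1 *: eI I.
have hy : rho0 *: vv + bb = Fmu I f c 0 w1 by rewrite /rho0 /vv norm2_nml F_shift.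
have iI : i \notin I by move/fintype.subsetP: hEA => /(_ i iEA); rewrite finset.in_setC.
have hder : forall y j, is_derive y (ebasis j) (c i) (row i AEA 0 j).
  move=> y j; apply: DeriveDef; first exact: ((Ckc i [::] (leq0n d) y Logic.I).2 d1 j).
  by have := hA i iEA y; move/rowP/(_ j); rewrite !mxE.
have cA := affine_c (c i) (row i AEA) hder.
set a : 'rV[R]_(n + m) := row_mx (row i AEA) 0.
have linE : forall w' : 'rV[R]_(n + m), c i (wx w') = c i 0 + lin a w'.
  move=> w'; rewrite cA; congr (_ + _); rewrite /lin big_split_ord /=.
  rewrite [X in _ = _ + X]big1 ?addr0 => [|l _]; last by rewrite /a row_mxEr mxE mul0r.
  by apply: eq_bigr => l _; rewrite /a row_mxEl /wx !mxE.
set J := fun t : R => U (t *: vv + bb).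
have oJ : forall t, J t -> \forall t' \near t, J t' by move=> t Jt; exact: near_line oU _ _ _ Jt.
have hJ : forall t, J t -> lin a (gline W vv bb t) = vv 0 (rshift n i) * t + - c i 0.
  move=> t Jt; have := hW _ Jt; move/rowP/(_ (rshift n i)).
  rewrite /Fmu (@row_mxEr R 1 n m) mxE (negbTE iI).
  have -> : (t *: vv + bb) 0 (rshift n i) = t * vv 0 (rshift n i).
    by rewrite mxE [(t *: vv) 0 _]mxE /bb [(_ *: eI I) 0 _]mxE /eI (@row_mxEr R 1 n m) mxE (negbTE iI) mulr0 addr0.
  rewrite linE /gline => E; rewrite -[lin a _](addKr (c i 0)) E; ring.
have Jr0 : J rho0 by rewrite /J hy.
rewrite linE.
have -> : wstar_p I f c W p mu1 w1 = taylor p (gline W vv bb) rho0 0 by [].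
rewrite /taylor lin_lin.
have q_ok : (p <= d.-1)%N by case/andP: hp => _ /leq_trans; apply; rewrite -subn1 leq_sub2l.
under eq_bigr => j _ do rewrite -(lin_line W U (d.-1) oU CkW vv bb a j (leq_trans (ltnSE (ltn_ord j)) q_ok) rho0 Jr0).
case: p hp q_ok => [//|p'] hp q_ok.
rewrite 2!big_ord_recl big1 => [|j _]; last first.
  have -> : (lift ord0 (lift ord0 j) : nat) = j.+2 by [].
  by rewrite (affine_derive _ _ _ _ oJ hJ j.+1 rho0 Jr0) mulr0.
have -> : ((ord0 : 'I_p'.+2) : nat) = 0%N by [].
have -> : (lift ord0 (ord0 : 'I_p'.+1) : nat) = 1%N by [].
rewrite derive1n0 (affine_derive _ _ _ _ oJ hJ 0 rho0 Jr0) hJ //=.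
rewrite expr0 expr1 fact0 factS fact0 muln1 divr1 divr1.
ring.
Qed.
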